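(* The following two statements are equivalent: (a) Every 2-connected cubic graph $G$ admits a proper $5$-edge-coloring $c$ with $|N_G(c)|\le 5$. (b) There exists a sublinear function $f:\mathbb{N}\to\mathbb{N}$ such that every 2-connected cubic graph $G$ admits a proper $5$-edge-coloring $c$ with $|N_G(c)|\le f(|V(G)|)$.
   Context: Graphs are finite, undirected, loopless, and may contain parallel edges. A proper $k$-edge-coloring of $G$ is a map $c:E(G)\to\{1,\dots,k\}$ with adjacent edges receiving different colors. For such $c$ and a vertex $v$, $S_c(v)$ is the set of colors on edges incident to $v$. An edge $uv$ of a cubic graph is poor if $|S_c(u)\cup S_c(v)|=3$, rich if $|S_c(u)\cup S_c(v)|=5$, and abnormal if it is neither poor nor rich. $N_G(c)$ denotes the set of abnormal edges of $G$ with respect to $c$. A function $f:\mathbb{N}\to\mathbb{N}$ is sublinear if $\lim_{n\to\infty} f(n)/n=0$. *)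

(* Defs.v *)
From mathcomp Require Import all_boot.
From Stdlib Require Rdefinitions Raxioms RIneq Rseries.

Set Implicit Arguments.
Unset Strict Implicit.
Unset Printing Implicit Defensive.

(* A finite multigraph: vertex type V, edge type E, each edge e has endpoints
   ends e = (u, v).  Parallel edges are allowed (distinct edges may have the
   same endpoints). *)
Section Graphs.
Variables (V E : finType) (ends : E -> V * V).

Definition loopless : Prop := forall e : E, (ends e).1 != (ends e).2.

Definition incident (v : V) (e : E) : bool :=
  (v == (ends e).1) || (v == (ends e).2).

(* cubic: every vertex has degree 3 (loopless, so degree = #incident edges) *)
Definition cubic : Prop := forall v : V, #|[set e | incident v e]| = 3.

Definition adj (x y : V) : bool :=
  [exists e : E, (ends e == (x, y)) || (ends e == (y, x))].

Definition connected_graph : Prop :=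
  forall x y : V, connect adj x y.

Definition connected_minus (v : V) : Prop :=
  forall x y : V, x != v -> y != v ->
    connect (fun a b => [&& a != v, b != v & adj a b]) x y.

Definition two_connected : Prop :=
  1 < #|V| /\ connected_graph /\ forall v : V, connected_minus v.

Definition proper_coloring (k : nat) (c : E -> 'I_k) : Prop :=
  forall e f : E, e != f ->
    (exists v : V, incident v e && incident v f) -> c e != c f.

Definition Sc (k : nat) (c : E -> 'I_k) (v : V) : {set 'I_k} :=
  [set c e | e in [set e | incident v e]].

Definition poor_edge (k : nat) (c : E -> 'I_k) (e : E) : bool :=
  #|Sc c (ends e).1 :|: Sc c (ends e).2| == 3.

Definition rich_edge (k : nat) (c : E -> 'I_k) (e : E) : bool :=
  #|Sc c (ends e).1 :|: Sc c (ends e).2| == 5.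

Definition abnormal_edges (k : nat) (c : E -> 'I_k) : {set E} :=
  [set e | ~~ poor_edge c e & ~~ rich_edge c e].

End Graphs.

Definition two_conn_cubic (V E : finType) (ends : E -> V * V) : Prop :=
  loopless ends /\ cubic ends /\ two_connected ends.

Definition sublinear (f : nat -> nat) : Prop :=
  Rseries.Un_cv
    (fun n => Rdefinitions.Rdiv (Raxioms.INR (f n)) (Raxioms.INR n))
    Rdefinitions.R0.

(* Main.v *)
Require Import Defs.
From mathcomp Require Import all_boot.
From mathcomp Require Import zify.
From Stdlib Require Reals Lra Lia Psatz ZArith Classical.
Set Implicit Arguments. Unset Strict Implicit. Unset Printing Implicit Defensive.

Lemma connect_map (T T' : finType) (f : T -> T') (e : rel T) (e' : rel T') :
  (forall a b, e a b -> e' (f a) (f b)) ->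
  forall x y, connect e x y -> connect e' (f x) (f y).
Proof.
move=> H x y /connectP [p]; elim: p x => [|z p IH] x /=; first by move=> _ ->.
case/andP=> exz pz ly; apply: connect_trans (connect1 (H _ _ exz)) (IH _ pz ly).
Qed.

Lemma path_first (T : finType) (e e' : rel T) (B : pred T) :
  (forall a b, e a b -> ~~ B a -> e' a b) ->
  forall x p, path e x p -> B (last x p) -> exists2 y, B y & connect e' x y.
Proof.
move=> H x p; elim: p x => [|z p IH] x /=; first by move=> _ Bx; exists x.
case/andP=> exz pz Bl; case Bx: (B x); first by exists x.
have [y By cy] := IH _ pz Bl; exists y => //.
by apply: connect_trans cy; apply: connect1; apply: H => //; rewrite Bx.
Qed.

Section Gen.
Variables (V E : finType) (ends : E -> V * V).

Definition Rm (z : V) := fun a b => [&& a != z, b != z & adj ends a b].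

Lemma adj_sym : symmetric (adj ends).
Proof. by move=> x y; apply/existsP/existsP => -[e He]; exists e; rewrite orbC. Qed.

Lemma Rm_sym z : symmetric (Rm z).
Proof. by move=> x y; rewrite /Rm adj_sym andbCA. Qed.

Lemma hub_conn z h : h != z -> (forall x, x != z -> connect (Rm z) x h) ->
  connected_minus ends z.
Proof.
move=> hz H x y xz yz; apply: connect_trans (H x xz) _.
by rewrite (sym_connect_sym (Rm_sym z)); apply: H.
Qed.

Lemma two_conn_of : loopless ends -> cubic ends -> 1 < #|V| ->
  (forall z, connected_minus ends z) -> two_connected ends.
Proof.
move=> ll cu V1 cm; split=> //; split=> // x y.
case: (altP (x =P y)) => [->|xy]; first exact: connect0.
case: (pickP [pred z | (z != x) && (z != y)]) => [z /andP [zx zy]|none].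
  apply: connect_sub (cm z x y _ _); last by rewrite eq_sym.
    by move=> a b /and3P [_ _ h]; apply: connect1.
  by rewrite eq_sym.
have : 0 < #|[set e | incident ends x e]| by rewrite cu.
case/card_gt0P => e; rewrite inE /incident => /orP [] /eqP ex.
  have h := none (ends e).2; have := ll e; rewrite -ex eq_sym => ne.
  move: h; rewrite /= ne /= => /negbFE /eqP ey.
  by apply: connect1; apply/existsP; exists e; rewrite ex -ey -surjective_pairing eqxx.
have h := none (ends e).1; have := ll e; rewrite -ex => ne.
move: h; rewrite /= ne /= => /negbFE /eqP ey.
by apply: connect1; apply/existsP; exists e; rewrite ex -ey -surjective_pairing eqxx orbT.
Qed.
End Gen.


Section Ring.
Variables (V E : finType) (ends : E -> V * V) (e0 : E) (k : nat).
Hypothesis ll : loopless ends.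

Definition u0 := (ends e0).1.
Definition v0 := (ends e0).2.

Definition rends (x : E * 'I_k.+1) : (V * 'I_k.+1) * (V * 'I_k.+1) :=
  if x.1 == e0 then ((v0, x.2), (u0, ordS x.2))
  else (((ends x.1).1, x.2), ((ends x.1).2, x.2)).

Definition gmap (w : V) (i : 'I_k.+1) (e : E) : E * 'I_k.+1 :=
  if (e == e0) && (w == u0) then (e0, ord_pred i) else (e, i).

Lemma uv0 : u0 != v0. Proof. exact: ll. Qed.

Lemma inc_ring w i :
  [set x | incident rends (w, i) x] = gmap w i @: [set e | incident ends w e].
Proof.
have uv := uv0.
apply/setP => -[e j]; rewrite inE; apply/idP/imsetP.
  rewrite /incident /rends /=; case: (e =P e0) => [->|ne].
    rewrite /= !xpair_eqE => /orP [/andP [/eqP -> /eqP ->]|/andP [/eqP -> /eqP ->]].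
      exists e0; first by rewrite inE /incident eqxx orbT.
      by rewrite /gmap eqxx /= eq_sym (negbTE uv).
    exists e0; first by rewrite inE /incident eqxx.
    by rewrite /gmap !eqxx /= ordSK.
  rewrite /= !xpair_eqE => /orP [/andP [/eqP -> /eqP ->]|/andP [/eqP -> /eqP ->]].
    exists e; first by rewrite inE /incident eqxx.
    by rewrite /gmap (introF eqP ne).
  exists e; first by rewrite inE /incident eqxx orbT.
  by rewrite /gmap (introF eqP ne).
case=> x; rewrite inE /incident /gmap => Hx ->.
case: (x =P e0) => [ex|ne] /=.
  subst x; case: (w =P u0) => [->|nw] /=; rewrite /rends eqxx /= !xpair_eqE.
    by rewrite ord_predK !eqxx orbT.
  by move: Hx; rewrite -/u0 -/v0 (introF eqP nw) /= => ->; rewrite eqxx.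
by rewrite /rends /= (introF eqP ne) /= !xpair_eqE eqxx !andbT.
Qed.

Lemma gmap_inj w i : injective (gmap w i).
Proof.
move=> x y; rewrite /gmap.
case: ifP => [/andP [/eqP -> _]|_]; case: ifP => [/andP [/eqP -> _]|_] //.
all: by case=> ->.
Qed.

Lemma ring_cubic : cubic ends -> cubic rends.
Proof.
move=> cu [w i]; rewrite inc_ring card_imset; [exact: cu | exact: gmap_inj].
Qed.

Lemma ring_loopless : loopless rends.
Proof.
move=> [e j]; rewrite /rends /=; case: (e == e0) => /=.
  by rewrite xpair_eqE negb_and eq_sym uv0.
by rewrite xpair_eqE negb_and ll.
Qed.

Definition adjH (a b : V) :=
  [exists e, (e != e0) && ((ends e == (a, b)) || (ends e == (b, a)))].
Definition RmH (w : V) := fun a b => [&& a != w, b != w & adjH a b].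

Lemma adjH_sym : symmetric adjH.
Proof. by move=> x y; apply/existsP/existsP => -[e He]; exists e; rewrite orbC. Qed.

Lemma liftH (w : V) (i j : 'I_k.+1) a b : j != i -> connect adjH a b ->
  connect (Rm rends (w, i)) (a, j) (b, j).
Proof.
move=> ji; apply: (connect_map (f := fun x => (x, j))) => x y /existsP [e /andP [ne He]].
rewrite /Rm !xpair_eqE !(negbTE ji) !andbF /=; apply/existsP; exists (e, j).
rewrite /rends /= (negbTE ne) !xpair_eqE.
by case/orP: He => /eqP ->; rewrite /= !eqxx ?orbT.
Qed.

Lemma liftRmH (w : V) (i : 'I_k.+1) a b : connect (RmH w) a b ->
  connect (Rm rends (w, i)) (a, i) (b, i).
Proof.
apply: (connect_map (f := fun x => (x, i))) => x y /and3P [xw yw /existsP [e /andP [ne He]]].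
rewrite /Rm !xpair_eqE (negbTE xw) (negbTE yw) /=; apply/existsP; exists (e, i).
rewrite /rends /= (negbTE ne) !xpair_eqE.
by case/orP: He => /eqP ->; rewrite /= !eqxx ?orbT.
Qed.

Lemma edge_e0 j : adj rends (v0, j) (u0, ordS j).
Proof. by apply/existsP; exists (e0, j); rewrite /rends /= eqxx eqxx. Qed.

Hypothesis tc : two_connected ends.
Hypothesis cu : cubic ends.

Lemma F1 w x : x != w -> exists2 t, ((t == u0) || (t == v0)) && (t != w)
  & connect (RmH w) x t.
Proof.
move=> xw.
have [t Bt] : exists t, ((t == u0) || (t == v0)) && (t != w).
  case: (altP (u0 =P w)) => [uw|uw]; last by exists u0; rewrite eqxx.
  by exists v0; rewrite eqxx orbT -uw eq_sym uv0.
have := (proj2 (proj2 tc)) w x t xw (proj2 (andP Bt)).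
case/connectP => p pp lp.
apply: (path_first (B := fun a => ((a == u0) || (a == v0)) && (a != w))) pp _.
  move=> a b /and3P [aw bw /existsP [e He]] nB; rewrite /RmH aw bw /=.
  apply/existsP; exists e; rewrite He andbT.
  apply/eqP => ee; move: nB; rewrite aw andbT; subst e.
  by case/orP: He => /eqP Ee; rewrite /u0 /v0 Ee /= eqxx ?orbT.
by rewrite -lp.
Qed.

Lemma H_uv : connect adjH u0 v0.
Proof.
have : 1 < #|[set e | incident ends u0 e] :\ e0|.
  have inc0 : incident ends u0 e0 by rewrite /incident /u0 eqxx.
  by have := cu u0; rewrite (cardsD1 e0 [set e | incident ends u0 e]) inE inc0 => -[<-].
move/ltnW/card_gt0P => [e1]; rewrite !inE /incident => /andP [ne1 inc1].
have l1 := ll e1.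
pose z := if (ends e1).1 == u0 then (ends e1).2 else (ends e1).1.
have az : adjH u0 z.
  apply/existsP; exists e1; rewrite ne1 /= /z.
  case: (altP ((ends e1).1 =P u0)) => [<-|nu].
    by rewrite -surjective_pairing eqxx.
  move: inc1; rewrite eq_sym (negbTE nu) /= => /eqP ->.
  by rewrite -surjective_pairing eqxx orbT.
have zu : z != u0.
  rewrite /z; case: (altP ((ends e1).1 =P u0)) => [<-|nu] //.
  by rewrite eq_sym.
case: (altP (z =P v0)) => [zv|zv]; first by apply: connect1; rewrite -zv.
apply: connect_trans (connect1 az) _.
have vu : v0 != u0 by rewrite eq_sym uv0.
apply: connect_sub ((proj2 (proj2 tc)) u0 z v0 zu vu).
move=> a b /and3P [au bu /existsP [e He]]; apply: connect1; apply/existsP; exists e.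
rewrite He andbT; apply/eqP => ee; subst e.
by case/orP: He => /eqP Ee; move: au bu; rewrite /u0 Ee /= eqxx ?andbF.
Qed.
Lemma H_conn x : connect adjH x u0.
Proof.
have vu : connect adjH v0 u0 by rewrite (sym_connect_sym adjH_sym) H_uv.
have := (proj1 (proj2 tc)) x u0; case/connectP => p pp lp.
have [y /orP [/eqP ->|/eqP ->] cy] //: exists2 y, (y == u0) || (y == v0) & connect adjH x y.
  apply: (path_first (B := fun a => (a == u0) || (a == v0))) pp _; last by rewrite -lp eqxx.
  move=> a b /existsP [e He] nB; apply/existsP; exists e; rewrite He andbT.
  apply/eqP => ee; subst e; move: nB.
  by case/orP: He => /eqP Ee; rewrite /u0 /v0 Ee /= eqxx ?orbT.
exact: connect_trans cy vu.
Qed.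

Lemma itv (i : 'I_k.+1) t : val (iter t (@ordS _) i) = (i + t) %% k.+1.
Proof.
elim: t => [|t IH] /=; first by rewrite addn0 modn_small.
by rewrite IH /= -addn1 modnDml addn1 addnS.
Qed.

Lemma it_ne (i : 'I_k.+1) t : 0 < t <= k -> iter t (@ordS _) i != i.
Proof.
case/andP=> t0 tk; apply/eqP => /(congr1 val); rewrite itv /= => h.
have hi := ltn_ord i; case: (ltnP (i + t) k.+1) => h1.
  by rewrite modn_small in h; lia.
by rewrite -(subnK h1) modnDr modn_small in h; lia.
Qed.

Lemma it_full (i : 'I_k.+1) : iter k.+1 (@ordS _) i = i.
Proof. by apply/val_inj; rewrite itv /= -modnDmr modnn addn0 modn_small. Qed.

Lemma it_surj (i j : 'I_k.+1) : j != i ->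
  exists2 t, 0 < t <= k & iter t (@ordS _) i = j.
Proof.
move=> ji; have jin : (j : nat) <> i by move=> h; move: ji; rewrite -val_eqE /= h eqxx.
have := ltn_ord i; have := ltn_ord j => hj hi.
case: (ltnP i j) => ij.
  exists (j - i); first by apply/andP; split; lia.
  by apply/val_inj; rewrite itv /= subnKC ?(ltnW ij) // modn_small.
exists (j + k.+1 - i); first by apply/andP; split; lia.
apply/val_inj; rewrite itv /=.
have -> : i + (j + k.+1 - i) = j + k.+1 by lia.
by rewrite modnDr modn_small.
Qed.

Lemma ne_copy (a w : V) (i j : 'I_k.+1) : j != i -> (a, j) != (w, i).
Proof. by move=> ji; rewrite xpair_eqE negb_and ji orbT. Qed.

Lemma ring_cm z : connected_minus rends z.
Proof.
case: z => w i.
have liftF a : a != w -> exists2 t, ((t == u0) || (t == v0)) && (t != w)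
    & connect (Rm rends (w, i)) (a, i) (t, i).
  by move=> aw; have [t Ht ct] := F1 aw; exists t => //; apply: liftRmH.
have cj j a b : j != i -> connect (Rm rends (w, i)) (a, j) (b, j).
  move=> ji; apply: liftH => //; apply: connect_trans (H_conn a) _.
  by rewrite (sym_connect_sym adjH_sym) H_conn.
have e0s j : adj rends (u0, ordS j) (v0, j) by rewrite adj_sym edge_e0.
case: (posnP k) => [k0|kpos].
  have allI j : j = i.
    by apply: val_inj; have := ltn_ord j; have := ltn_ord i; move: k0 => /= k0; lia.
  have Si : ordS i = i by apply: allI.
  case: (altP (w =P v0)) => [wv|wv].
    apply: (hub_conn (h := (u0, i))).
      by rewrite xpair_eqE negb_and wv uv0.
    move=> [a j]; rewrite (allI j) xpair_eqE eqxx andbT => aw.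
    have [t /andP [/orP [/eqP ->|/eqP tv] tw] ct] := liftF a aw => //.
    by move: tw; rewrite tv wv eqxx.
  apply: (hub_conn (h := (v0, i))).
    by rewrite xpair_eqE negb_and eq_sym wv.
  move=> [a j]; rewrite (allI j) xpair_eqE eqxx andbT => aw.
  have [t /andP [/orP [/eqP tu|/eqP ->] tw] ct] := liftF a aw => //.
  refine (connect_trans ct (connect1 _)); rewrite tu /Rm.
  rewrite !xpair_eqE !eqxx !andbT -tu tw eq_sym wv /=.
  by rewrite tu; have := e0s i; rewrite Si.
have Si : ordS i != i by apply: (@it_ne i 1); rewrite kpos.
have A t : 0 < t <= k ->
    connect (Rm rends (w, i)) (u0, iter t (@ordS _) i) (u0, ordS i).
  elim: t => [|t IH] // /andP [_ tk].
  case: (posnP t) => [->|tpos] //=.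
  have nt : iter t (@ordS _) i != i by apply: it_ne; rewrite tpos ltnW.
  have nt1 : ordS (iter t (@ordS _) i) != i.
    by apply: (@it_ne i t.+1); rewrite tk.
  apply: (connect_trans (y := (v0, iter t (@ordS _) i))).
    by apply: connect1; rewrite /Rm (ne_copy _ _ nt) (ne_copy _ _ nt1) e0s.
  apply: connect_trans (cj _ _ u0 nt) _.
  by apply: IH; rewrite tpos ltnW.
apply: (hub_conn (h := (u0, ordS i))); first exact: ne_copy.
move=> [a j] xz; case: (altP (j =P i)) => [ji|ji]; last first.
  have [t Ht <-] := it_surj ji.
  by apply: connect_trans (cj _ _ u0 _) (A t Ht); apply: it_ne.
subst j; have aw : a != w by move: xz; rewrite xpair_eqE eqxx andbT.
have [t /andP [/orP [/eqP tu|/eqP tv] tw] ct] := liftF a aw; apply: (connect_trans ct).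
  have nk : iter k (@ordS _) i != i by apply: it_ne; rewrite kpos leqnn.
  apply: (connect_trans (y := (v0, iter k (@ordS _) i))).
    apply: connect1; rewrite /Rm (ne_copy _ _ nk) !xpair_eqE eqxx andbT tw /= tu.
    by rewrite -{1}(it_full i) /= e0s.
  apply: connect_trans (cj _ _ u0 nk) _.
  by apply: A; rewrite kpos leqnn.
apply: connect1; rewrite /Rm (ne_copy _ _ Si) !xpair_eqE eqxx andbT tw /=.
by rewrite tv edge_e0.
Qed.

Lemma ring_tcc : two_conn_cubic rends.
Proof.
split; first exact: ring_loopless.
split; first exact: ring_cubic.
apply: two_conn_of; [exact: ring_loopless|exact: ring_cubic| |exact: ring_cm].
rewrite card_prod card_ord; have := proj1 tc; case: #|V| => // n; lia.
Qed.

Lemma inc_copy (z : V) (e : E) (i : 'I_k.+1) : e != e0 ->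
  incident rends (z, i) (e, i) = incident ends z e.
Proof. by move=> ne; rewrite /incident /rends /= (negbTE ne) /= !xpair_eqE eqxx !andbT. Qed.

Lemma inc_e0 z : incident ends z e0 -> (z == u0) || (z == v0).
Proof. by []. Qed.

Hypothesis bad : forall c : E -> 'I_5, proper_coloring ends c ->
  5 < #|abnormal_edges ends c|.

Lemma each_copy (c' : E * 'I_k.+1 -> 'I_5) : proper_coloring rends c' ->
  forall i, exists x, (x, i) \in abnormal_edges rends c'.
Proof.
move=> pc' i.
case: (boolP [exists x, (x, i) \in abnormal_edges rends c']) => [/existsP //|/existsPn H].
exfalso.
pose A := [set x | (x != e0) && (incident ends u0 x || incident ends v0 x)].
pose U := [set x | incident ends u0 x || incident ends v0 x].
have inc0u : incident ends u0 e0 by rewrite /incident /u0 eqxx.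
have inc0v : incident ends v0 e0 by rewrite /incident /v0 eqxx orbT.
have cardU : #|U| <= 5.
  have := cardsUI [set x | incident ends u0 x] [set x | incident ends v0 x].
  rewrite !cu => h.
  have : 0 < #|[set x | incident ends u0 x] :&: [set x | incident ends v0 x]|.
    by apply/card_gt0P; exists e0; rewrite !inE inc0u inc0v.
  have -> : U = [set x | incident ends u0 x] :|: [set x | incident ends v0 x].
    by apply/setP => x; rewrite !inE.
  lia.
have cardA : #|A| <= 4.
  have : A \subset U :\ e0 by apply/subsetP => x; rewrite !inE.
  move/subset_leq_card; rewrite (cardsD1 e0 U) inE inc0u /= in cardU; lia.
pose C := [set c' (x, i) | x in A].
have [col colC] : exists col, col \notin C.
  have hC : #|C| <= #|A| := leq_imset_card _ _.
  have : 0 < #|~: C| by rewrite cardsCs setCK card_ord; lia.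
  by case/card_gt0P => col; rewrite inE; exists col.
pose c x := if x == e0 then col else c' (x, i).
have inC x : x != e0 -> incident ends u0 x || incident ends v0 x -> c' (x, i) \in C.
  by move=> nx ix; apply: imset_f; rewrite inE nx.
have uvz z x : incident ends z e0 -> incident ends z x -> incident ends u0 x || incident ends v0 x.
  by case/orP=> /eqP -> ix; rewrite -/u0 -/v0 ix ?orbT.
have pc : proper_coloring ends c.
  move=> e f ef [z /andP [ze zf]]; rewrite /c.
  case: (altP (e =P e0)) => [ee|ne]; case: (altP (f =P e0)) => [fe|nf] //=.
  - by move: ef; rewrite ee fe eqxx.
  - apply/eqP => h; move: colC; rewrite h inC //.
    by apply: (uvz z) => //; rewrite -ee.
  - apply/eqP => h; move: colC; rewrite -h inC //.
    by apply: (uvz z) => //; rewrite -fe.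
  - apply: pc'.
      by rewrite xpair_eqE negb_and ef.
    by exists (z, i); rewrite !inc_copy // ze zf.
have := bad pc.
have : abnormal_edges ends c \subset U.
  have ScE a : a != u0 -> a != v0 -> Sc rends c' (a, i) = Sc ends c a.
    move=> au av; rewrite /Sc inc_ring -imset_comp; apply: eq_in_imset => y.
    rewrite inE => ya /=; rewrite /gmap /c.
    have yne : y != e0.
      by apply/eqP => ye; move: ya; rewrite ye /incident /u0 /v0 -/u0 -/v0 (negbTE au) (negbTE av).
    by rewrite (negbTE yne) (negbTE au) /=.
  apply/subsetP => x xa; apply/negPn/negP => xU.
  have nx : x != e0 by apply/eqP => xe; move: xU; rewrite xe inE inc0u.
  move: xU; rewrite inE /incident negb_or !negb_or => /andP [/andP [ua ub] /andP [va vb]].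
  have := H x; move: xa; rewrite !inE /poor_edge /rich_edge /rends /= (negbTE nx) /=.
  by rewrite !ScE // 1?eq_sym // => ->.
move/subset_leq_card; lia.
Qed.

Lemma many (c' : E * 'I_k.+1 -> 'I_5) : proper_coloring rends c' ->
  k.+1 <= #|abnormal_edges rends c'|.
Proof.
move=> pc'.
have h : [set: 'I_k.+1] \subset [set x.2 | x in abnormal_edges rends c'].
  apply/subsetP => i _.
  have [x hx] := each_copy pc' i; by apply/imsetP; exists (x, i).
have := subset_leq_card h; rewrite cardsT card_ord => h2.
exact: leq_trans h2 (leq_imset_card _ _).
Qed.

End Ring.

Module RealPart.
Import Reals Lra Lia Psatz ZArith.

Lemma not_sublinear (f : nat -> nat) (m : nat) : 0 < m ->
  (forall k, k.+1 <= f (m * k.+1)) -> ~ sublinear f.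
Proof.
move=> m0 H sf.
have m0' : (0 < INR m)%R by apply: lt_0_INR; apply/ltP.
have eps : (0 < / INR m)%R by apply: Rinv_0_lt_compat.
have [N HN] := sf _ eps.
pose n := (m * N.+1)%coq_nat.
have nN : (n >= N)%coq_nat.
  rewrite /n; have : (1 <= m)%coq_nat by apply/leP. nia.
have := HN n nN; rewrite /R_dist Rminus_0_r.
have hn : INR n = (INR m * INR N.+1)%R by rewrite /n mult_INR.
have hf : (INR N.+1 <= INR (f n))%R.
  apply: le_INR; apply/leP; exact: H.
have N0 : (0 < INR N.+1)%R by apply: lt_0_INR; lia.
have key : (/ INR m <= INR (f n) / INR n)%R.
  have -> : (/ INR m = INR N.+1 / INR n)%R by rewrite hn; field; lra.
  apply: Rmult_le_compat_r => //; apply: Rlt_le; apply: Rinv_0_lt_compat.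
  rewrite hn; nra.
rewrite Rabs_right; first lra.
apply: Rle_ge; apply: Rle_trans key; lra.
Qed.

Lemma const_sublinear : sublinear (fun _ => 5).
Proof.
move=> eps He.
have [N HN] : exists N : nat, (5 / eps < INR N)%R.
  have [Hz _] := archimed (5 / eps).
  have p : (0 < 5 / eps)%R by apply: Rdiv_lt_0_compat; lra.
  exists (Z.to_nat (up (5 / eps))).
  rewrite INR_IZR_INZ Z2Nat.id //.
  apply: le_IZR; lra.
exists N.+1 => n Hn; rewrite /R_dist Rminus_0_r.
have Nn : (INR N < INR n)%R by apply: lt_INR; lia.
have n0 : (0 < INR n)%R.
  apply: Rle_lt_trans Nn; apply: pos_INR.
have p : (0 < 5 / eps)%R by apply: Rdiv_lt_0_compat; lra.
rewrite Rabs_right; last first.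
  by apply: Rle_ge; apply: Rmult_le_pos; [ simpl; lra | apply: Rlt_le; apply: Rinv_0_lt_compat].
have : (5 < eps * INR n)%R.
  have h : (5 / eps * eps = 5)%R by field; lra.
  rewrite -h; rewrite Rmult_comm; apply: Rmult_lt_compat_l => //; lra.
move=> h; simpl.
apply (Rmult_lt_reg_r (INR n)) => //.
replace ((1 + 1 + 1 + 1 + 1) / INR n * INR n)%R with 5%R by (field; lra).
lra.
Qed.

End RealPart.


Theorem mainTheorem2 :
  (forall (V E : finType) (ends : E -> V * V), two_conn_cubic ends ->
     exists c : E -> 'I_5,
       proper_coloring ends c /\ #|abnormal_edges ends c| <= 5)
  <->
  (exists f : nat -> nat, sublinear f /\
     forall (V E : finType) (ends : E -> V * V), two_conn_cubic ends ->
       exists c : E -> 'I_5,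
         proper_coloring ends c /\ #|abnormal_edges ends c| <= f #|V|).
Proof.
split.
  move=> Ha; exists (fun _ => 5); split; first exact: RealPart.const_sublinear.
  exact: Ha.
move=> [f [sf Hb]] V E ends H.
case: (Classical_Prop.classic (exists c : E -> 'I_5, proper_coloring ends c /\ #|abnormal_edges ends c| <= 5)) => // nc.
exfalso.
have bad : forall c : E -> 'I_5, proper_coloring ends c -> 5 < #|abnormal_edges ends c|.
  by move=> c pc; rewrite ltnNge; apply/negP => h; apply: nc; exists c; split.
have [ll [cu tc]] := H.
have V0 : 0 < #|V| by have := proj1 tc; case: #|V|.
have [e0] : exists e0 : E, true.
  have [v _] := card_gt0P V0.
  have : 0 < #|[set e | incident ends v e]| by rewrite cu.
  by case/card_gt0P => e _; exists e.
move=> _.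
apply: (@RealPart.not_sublinear f #|V| V0 _ sf) => k.
have [c' [pc hc]] := Hb _ _ _ (ring_tcc e0 k ll tc cu).
apply: leq_trans (many ll cu bad pc) _.
by rewrite card_prod card_ord in hc.
Qed.
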